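(* Let $L$ be a simple Lie algebra over a field $k$ with $|k|\geq4$, generated by its pure extremal elements, whose extremal geometry contains lines. Let $x,y\in E$ with $g(x,y)=1$ and associated $5$-grading $L=\bigoplus_{i=-2}^2L_i$. Let $c,d\in E\cap L_{-1}$ with $[c,d]=x$, put $q=-[y,d]$ (so that $g(c,q)=1$), let $L=\bigoplus_{i=-2}^2L'_i$ be the $5$-grading associated with $(c,q)$, and put $J=L_{-1}\cap L'_{-1}$, $J'=L_{-1}\cap L'_0$. Then $L_{-1}=kc\oplus J\oplus J'\oplus kd$. Moreover $L_{-1}\cap L'_1=kd$.
   Context: A nonzero $a\in L$ is extremal if there is $g_a\colon L\to k$ with $[a,[a,u]]=2g_a(u)a$, $[[a,u],[a,w]]=g_a([u,w])a+g_a(w)[a,u]-g_a(u)[a,w]$, $[a,[u,[a,w]]]=g_a([u,w])a-g_a(w)[a,u]-g_a(u)[a,w]$ for all $u,w$; sandwiches satisfy $[a,[a,u]]=0=[a,[u,[a,w]]]$; pure = non-sandwich; $E$ = set of extremal elements; $g$ = unique symmetric bilinear form with $g(a,u)=g_a(u)$ for $a\in E$. Pure extremal $a,b$, $ka\ne kb$, are collinear if $[a,b]=0$ and $\lambda a+\mu b\in E\cup\{0\}$ for all $\lambda,\mu$; the extremal geometry contains lines iff such a pair exists. For $a,b\in E$ with $g(a,b)=1$ the associated $5$-grading is $M_{-2}=ka$, $M_{-1}=[a,U]$, $M_0=\{l:[a,l]\in ka,[b,l]\in kb\}$, $M_1=[b,U]$, $M_2=kb$ with $U=\{u:g(u,a)=g(u,b)=g(u,[a,b])=0\}$.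 Elements $c,d$ as in the claim exist under these hypotheses. *)

(* Defs.v *)
From HB Require Import structures.
From mathcomp Require Import all_boot all_order all_algebra.
Set Implicit Arguments. Unset Strict Implicit. Unset Printing Implicit Defensive.
Import GRing.Theory.
Local Open Scope ring_scope.

Section Lie.
Variables (k : fieldType) (L : lmodType k) (br : L -> L -> L).

Definition is_lie_bracket : Prop :=
  [/\ (forall (a : k) u v w, br (a *: u + v) w = a *: br u w + br v w),
      (forall (a : k) u v w, br w (a *: u + v) = a *: br w u + br w v),
      (forall u, br u u = 0) &
      (forall u v w, br u (br v w) + br v (br w u) + br w (br u v) = 0)].

Definition is_subspace (S : L -> Prop) : Prop :=
  [/\ S 0, (forall u v, S u -> S v -> S (u + v)) &
      (forall (a : k) u, S u -> S (a *: u))].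

Definition is_ideal (I : L -> Prop) : Prop :=
  is_subspace I /\ (forall u v, I v -> I (br u v)).

Definition is_subalgebra (S : L -> Prop) : Prop :=
  is_subspace S /\ (forall u v, S u -> S v -> S (br u v)).

Definition lie_simple : Prop :=
  (exists u v, br u v != 0) /\
  (forall I, is_ideal I -> (forall v, I v -> v = 0) \/ (forall v, I v)).

Definition extremal_form (a : L) (ga : L -> k) : Prop :=
  forall u w,
  [/\ br a (br a u) = (2 * ga u) *: a,
      br (br a u) (br a w) = ga (br u w) *: a + ga w *: br a u - ga u *: br a w &
      br a (br u (br a w)) = ga (br u w) *: a - ga w *: br a u - ga u *: br a w].

Definition extremal (a : L) : Prop :=
  a != 0 /\ exists ga : L -> k, extremal_form a ga.

Definition sandwich (a : L) : Prop :=
  extremal a /\ forall u w, br a (br a u) = 0 /\ br a (br u (br a w)) = 0.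

Definition pure_extremal (a : L) : Prop := extremal a /\ ~ sandwich a.

Definition generated_by_pure : Prop :=
  forall S, is_subalgebra S -> (forall a, pure_extremal a -> S a) -> forall v, S v.

Definition collinear (a b : L) : Prop :=
  [/\ pure_extremal a, pure_extremal b,
      (forall l : k, a != l *: b) /\ (forall l : k, b != l *: a),
      br a b = 0 &
      forall l m : k, extremal (l *: a + m *: b) \/ l *: a + m *: b = 0].

Definition has_lines : Prop := exists a b, collinear a b.

Definition extremal_form_g (g : L -> L -> k) : Prop :=
  [/\ (forall (a : k) u v w, g (a *: u + v) w = a * g u w + g v w),
      (forall u v, g u v = g v u) &
      (forall a, extremal a -> extremal_form a (g a))].

(* 5-grading associated with (a,b), g(a,b) = 1 *)
Variable g : L -> L -> k.
Definition gradU (a b : L) (u : L) : Prop :=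
  [/\ g u a = 0, g u b = 0 & g u (br a b) = 0].
Definition grad_m2 (a b : L) (v : L) : Prop := exists l : k, v = l *: a.
Definition grad_m1 (a b : L) (v : L) : Prop := exists u, gradU a b u /\ v = br a u.
Definition grad_0 (a b : L) (v : L) : Prop :=
  (exists l : k, br a v = l *: a) /\ (exists l : k, br b v = l *: b).
Definition grad_1 (a b : L) (v : L) : Prop := exists u, gradU a b u /\ v = br b u.
Definition grad_2 (a b : L) (v : L) : Prop := exists l : k, v = l *: b.

End Lie.

Definition card_ge4 (k : fieldType) : Prop :=
  exists a b c d : k, uniq [:: a; b; c; d].

(* Main.v *)
Require Import Defs.
From HB Require Import structures.
From mathcomp Require Import all_boot all_order all_algebra.
From mathcomp Require Import ring.
Import GRing.Theory.
Local Open Scope ring_scope.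

Set Implicit Arguments. Unset Strict Implicit. Unset Printing Implicit Defensive.

Section LinComb.
Variables (k : fieldType) (L : lmodType k).
Inductive mexpr : Type := MZ | MA of nat | MAdd of mexpr & mexpr | MOpp of mexpr | MSc of k & mexpr.
Fixpoint den (env : seq L) e := match e with MZ => 0 | MA i => nth 0 env i
 | MAdd a b => den env a + den env b | MOpp a => - den env a | MSc c a => c *: den env a end.
Fixpoint coef e (i : nat) : k := match e with MZ => 0 | MA j => if Nat.eqb j i then 1 else 0
 | MAdd a b => coef a i + coef b i | MOpp a => - coef a i | MSc c a => c * coef a i end.
Lemma denE env e : den env e = \sum_(0 <= i < size env) coef e i *: nth 0 env i.
Proof.
elim: e => [|j|a IHa b IHb|a IHa|c a IHa] /=.
- by rewrite big1 // => i _; rewrite scale0r.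
- case: (ltnP j (size env)) => Hj.
  + rewrite (bigD1_seq j) ?mem_iota ?iota_uniq //= ?add0n ?subn0 //.
    rewrite PeanoNat.Nat.eqb_refl scale1r big1 ?addr0 // => i /negPf Hi.
    have -> : Nat.eqb j i = false by apply/PeanoNat.Nat.eqb_neq => E; rewrite E eqxx in Hi.
    by rewrite scale0r.
  + rewrite nth_default // big1_seq // => i /andP[_]; rewrite mem_iota add0n subn0 => /andP[_ Hi].
    have -> : Nat.eqb j i = false.
      apply/PeanoNat.Nat.eqb_neq => E; subst; by rewrite leqNgt Hi in Hj.
    by rewrite scale0r.
- by rewrite IHa IHb -big_split /=; apply: eq_bigr => i _; rewrite scalerDl.
- by rewrite IHa -sumrN; apply: eq_bigr => i _; rewrite scaleNr.
- by rewrite IHa scaler_sumr; apply: eq_bigr => i _; rewrite scalerA.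
Qed.
Fixpoint all_eq (n : nat) e1 e2 : Prop := match n with 0 => True
  | S n => coef e1 n = coef e2 n /\ all_eq n e1 e2 end.
Lemma den_eq env e1 e2 : all_eq (size env) e1 e2 -> den env e1 = den env e2.
Proof.
move=> H; rewrite !denE; apply: eq_big_seq => i; rewrite mem_iota add0n subn0 => /andP[_ Hi].
suff -> : coef e1 i = coef e2 i by [].
elim: (size env) H Hi => [//|n IH] /= [H1 H2]; rewrite ltnS leq_eqVlt => /orP[/eqP->//|].
move=> Hi; exact: IH H2 Hi.
Qed.
End LinComb.

Ltac find_idx t l := match l with
  | cons t _ => constr:(0%N)
  | cons _ ?tl => let n := find_idx t tl in constr:(S n) end.
Ltac collect e acc := match e with
 | ?a + ?b => let acc := collect a acc in collect b acc
 | - ?a => collect a acc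
 | ?c *: ?a => collect a acc
 | 0 => acc
 | _ => constr:(cons e acc) end.
Ltac reify e env := match e with
 | ?a + ?b => let x := reify a env in let y := reify b env in open_constr:(@MAdd _ x y)
 | - ?a => let x := reify a env in open_constr:(@MOpp _ x)
 | ?c *: ?a => let x := reify a env in open_constr:(@MSc _ c x)
 | 0 => open_constr:(@MZ _)
 | _ => let i := find_idx e env in open_constr:(@MA _ i) end.
Ltac lmod := match goal with |- @eq ?T ?l ?r =>
  let env := collect l (@nil T) in let env := collect r env in
  let el := reify l env in let er := reify r env in
  change (den env el = den env er); apply: den_eq;
  cbv [all_eq coef Nat.eqb size]; repeat split; ring end.


Section Basics.
Variables (k : fieldType) (L : lmodType k) (br : L -> L -> L) (g : L -> L -> k).
Hypothesis Hbr : is_lie_bracket br.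
Hypothesis Hg : extremal_form_g br g.

Lemma brDl u v w : br (u + v) w = br u w + br v w.
Proof. case: Hbr => H1 _ _ _; have := H1 1 u v w; by rewrite !scale1r. Qed.
Lemma brDr u v w : br w (u + v) = br w u + br w v.
Proof. case: Hbr => _ H2 _ _; have := H2 1 u v w; by rewrite !scale1r. Qed.
Lemma br0l w : br 0 w = 0.
Proof. have := brDl 0 0 w; rewrite addr0 -{1}[br 0 w]addr0 => /addrI; by move<-. Qed.
Lemma br0r w : br w 0 = 0.
Proof. have := brDr 0 0 w; rewrite addr0 -{1}[br w 0]addr0 => /addrI; by move<-. Qed.
Lemma brZl a u w : br (a *: u) w = a *: br u w.
Proof. case: Hbr => H1 _ _ _; have := H1 a u 0 w; by rewrite !addr0 br0l addr0. Qed.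
Lemma brZr a u w : br w (a *: u) = a *: br w u.
Proof. case: Hbr => _ H2 _ _; have := H2 a u 0 w; by rewrite !addr0 br0r addr0. Qed.
Lemma brNl u w : br (- u) w = - br u w.
Proof. by rewrite -scaleN1r brZl scaleN1r. Qed.
Lemma brNr u w : br w (- u) = - br w u.
Proof. by rewrite -scaleN1r brZr scaleN1r. Qed.
Lemma brxx u : br u u = 0.
Proof. by case: Hbr. Qed.
Lemma brC u v : br u v = - br v u.
Proof.
have := brxx (u + v); rewrite brDl !brDr !brxx add0r addr0 => /eqP.
by rewrite addr_eq0 => /eqP.
Qed.
Lemma brJ a b w : br a (br b w) = br (br a b) w + br b (br a w).
Proof.
case: Hbr => _ _ _ H4; have := H4 a b w.
rewrite (brC w (br a b)) (brC w a) brNr => /eqP; rewrite -subr_eq0 => /eqP H.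
apply/eqP; rewrite -subr_eq0; apply/eqP; rewrite -H; lmod.
Qed.

Lemma gDl u v w : g (u + v) w = g u w + g v w.
Proof. case: Hg => H1 _ _; have := H1 1 u v w; by rewrite scale1r mul1r. Qed.
Lemma g0l w : g 0 w = 0.
Proof. have := gDl 0 0 w; rewrite addr0 -{1}[g 0 w]addr0 => /addrI; by move<-. Qed.
Lemma gZl a u w : g (a *: u) w = a * g u w.
Proof. case: Hg => H1 _ _; have := H1 a u 0 w; by rewrite addr0 g0l addr0. Qed.
Lemma gC u v : g u v = g v u.
Proof. by case: Hg. Qed.
Lemma gNl u w : g (- u) w = - g u w.
Proof. by rewrite -scaleN1r gZl mulN1r. Qed.
Lemma gDr u v w : g w (u + v) = g w u + g w v.
Proof. by rewrite gC gDl gC (gC v). Qed.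
Lemma g0r w : g w 0 = 0.
Proof. by rewrite gC g0l. Qed.
Lemma gZr a u w : g w (a *: u) = a * g w u.
Proof. by rewrite gC gZl gC. Qed.
Lemma gNr u w : g w (- u) = - g w u.
Proof. by rewrite gC gNl gC. Qed.

Lemma E1 a u : extremal br a -> br a (br a u) = (2 * g a u) *: a.
Proof. move=> Ha; case: Hg => _ _ H; by case: (H a Ha u u). Qed.
Lemma E2 a u w : extremal br a ->
  br (br a u) (br a w) = g a (br u w) *: a + g a w *: br a u - g a u *: br a w.
Proof. move=> Ha; case: Hg => _ _ H; by case: (H a Ha u w). Qed.
Lemma E3 a u w : extremal br a ->
  br a (br u (br a w)) = g a (br u w) *: a - g a w *: br a u - g a u *: br a w.
Proof. move=> Ha; case: Hg => _ _ H; by case: (H a Ha u w). Qed.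
Lemma ext_neq0 a : extremal br a -> a != 0.
Proof. by case. Qed.

End Basics.

Section Ext.
Variables (k : fieldType) (L : lmodType k) (br : L -> L -> L) (g : L -> L -> k).
Hypothesis Hbr : is_lie_bracket br.
Hypothesis Hg : extremal_form_g br g.
Hypothesis Hsimple : lie_simple br.

Local Notation brDl := (brDl Hbr). Local Notation brDr := (brDr Hbr).
Local Notation br0l := (br0l Hbr). Local Notation br0r := (br0r Hbr).
Local Notation brZl := (brZl Hbr). Local Notation brZr := (brZr Hbr).
Local Notation brNl := (brNl Hbr). Local Notation brNr := (brNr Hbr).
Local Notation brxx := (brxx Hbr). Local Notation brC := (brC Hbr).
Local Notation brJ := (brJ Hbr).
Local Notation gDl := (gDl Hg). Local Notation g0l := (g0l Hg).
Local Notation gZl := (gZl Hg). Local Notation gC := (gC Hg).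
Local Notation gNl := (gNl Hg). Local Notation gDr := (gDr Hg).
Local Notation g0r := (g0r Hg). Local Notation gZr := (gZr Hg).
Local Notation gNr := (gNr Hg).
Local Notation E1 := (E1 Hg). Local Notation E2 := (E2 Hg). Local Notation E3 := (E3 Hg).

Lemma notall a : a != 0 -> ~ (forall w, exists l, br a w = l *: a).
Proof.
move=> a0 H.
pose I := fun v : L => exists l : k, v = l *: a.
have HI : is_ideal br I.
  split; first split.
  - by exists 0; rewrite scale0r.
  - by move=> u v [l ->] [m ->]; exists (l + m); rewrite scalerDl.
  - by move=> c u [l ->]; exists (c * l); rewrite scalerA.
  - move=> u v [l ->]; have [m Hm] := H u; exists (- (l * m)).
    by rewrite brZr brC Hm scalerN scalerA scaleNr.
case: Hsimple => [[u [v Huv]]] /(_ I HI) [H0|Hall].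
- by move: a0; rewrite (H0 a) ?eqxx //; exists 1; rewrite scale1r.
- move: Huv; have [l ->] := Hall u; have [m ->] := Hall v.
  by rewrite brZl brZr brxx !scaler0 eqxx.
Qed.

Lemma ext_gaa a : extremal br a -> g a a = 0 /\ forall w, g a (br a w) = 0.
Proof.
move=> Ha; have a0 := ext_neq0 Ha.
have key : forall w, g a (br a w) *: a = g a a *: br a w.
  move=> w; have := E2 a w Ha; rewrite brxx br0l scaler0 addr0 => /eqP.
  rewrite eq_sym subr_eq0 => /eqP ->; by [].
have gaa : g a a = 0.
  case: (eqVneq (g a a) 0) => // Hn; exfalso; apply: (notall a0) => w.
  exists (g a (br a w) / g a a); rewrite mulrC -scalerA key scalerA mulVf ?scale1r //.
split=> // w; have := key w; rewrite gaa scale0r => /eqP.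
by rewrite scaler_eq0 (negPf a0) orbF => /eqP.
Qed.

Lemma ext_nonprop a b : extremal br a -> g a b != 0 -> forall l, br a b != l *: a.
Proof.
move=> Ha Hab l; apply/negP => /eqP Hl; apply: (notall (ext_neq0 Ha)) => w.
have := E2 b w Ha; rewrite Hl brZl E1 // scalerA => H.
exists ((g a (br b w) + g a w * l - l * (2 * g a w)) / g a b).
apply: (@scalerI _ _ (g a b)) => //; rewrite scalerA mulrC mulfVK //.
apply/eqP; rewrite -subr_eq0; apply/eqP; move/eqP: H; rewrite -subr_eq0 => /eqP H.
rewrite -[RHS]H; lmod.
Qed.

Lemma ext_scale a l : extremal br a -> l != 0 -> extremal br (l *: a).
Proof.
move=> Ha l0; split; first by rewrite scaler_eq0 negb_or l0 (ext_neq0 Ha).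
exists (fun u => l * g a u) => u w; split.
- rewrite !brZl brZr E1 //; lmod.
- rewrite !brZl !brZr E2 //; lmod.
- rewrite !brZl !brZr E3 //; lmod.
Qed.

Definition phi a u := u + br a u + g a u *: a.

Lemma phiD a u v : phi a (u + v) = phi a u + phi a v.
Proof. rewrite /phi brDr gDr; lmod. Qed.
Lemma phiZ a c u : phi a (c *: u) = c *: phi a u.
Proof. rewrite /phi brZr gZr; lmod. Qed.
Lemma phiN a u : phi a (- u) = - phi a u.
Proof. by rewrite -scaleN1r phiZ scaleN1r. Qed.
Lemma phi0 a : phi a 0 = 0.
Proof. by rewrite /phi br0r g0r scale0r !addr0. Qed.

Lemma phi_br a u w : extremal br a -> br (phi a u) (phi a w) = phi a (br u w).
Proof.
move=> Ha; rewrite /phi !brDl !brDr !brZl !brZr brxx E2 //.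
rewrite (brC u a) (brC (br a u) a) E1 // (brJ a u w) !scaler0.
rewrite E1 //. lmod.
Qed.

Lemma ext_neg a : extremal br a -> extremal br (- a).
Proof. move=> Ha; rewrite -scaleN1r; apply: ext_scale => //; by rewrite oppr_eq0 oner_eq0. Qed.

Lemma phi_inv a u : extremal br a -> phi (- a) (phi a u) = u.
Proof.
move=> Ha; have [gaa gab] := ext_gaa Ha.
rewrite /phi !brDr !brZr brNl !brNl brxx E1 // !gNl !gDr !gZr gab gaa.
lmod.
Qed.

Lemma phi_ext a b : extremal br a -> extremal br b ->
  extremal br (phi a b) /\ extremal_form br (phi a b) (fun u => g b (phi (- a) u)).
Proof.
move=> Ha Hb; have Hna := ext_neg Ha.
have inv1 : forall u, phi a (phi (- a) u) = u.
  by move=> u; have := phi_inv u Hna; rewrite opprK.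
have EF : extremal_form br (phi a b) (fun u => g b (phi (- a) u)).
  move=> u w; rewrite -(inv1 u) -(inv1 w); move: (phi (-a) u) (phi (-a) w) => u' w'.
  rewrite !phi_br // !phi_inv //.
  by split; rewrite ?E1 ?E2 ?E3 // ?phiD ?phiN ?phiZ.
split=> //; split=> //; last by exists (fun u => g b (phi (- a) u)).
apply/negP => /eqP H0; move: (ext_neq0 Hb); have := phi_inv b Ha.
by rewrite H0 phi0 => ->; rewrite eqxx.
Qed.

Lemma uniq_g z ga w0 : extremal br z ->
  (forall u w, br (br z u) (br z w) = ga (br u w) *: z + ga w *: br z u - ga u *: br z w) ->
  g z w0 != 0 -> ga w0 = g z w0 -> forall w, ga w = g z w.
Proof.
move=> Hz H2 Hw0 E0 w; apply/eqP; apply/negP => /negP Hne.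
have := H2 w0 w; rewrite E2 // E0 => /eqP; rewrite -subr_eq0 => /eqP H.
have Hne' : ga w - g z w != 0 by rewrite subr_eq0.
move/negP: (ext_nonprop Hz Hw0 ((g z (br w0 w) - ga (br w0 w)) / (ga w - g z w))); apply.
apply/eqP; apply: (@scalerI _ _ (ga w - g z w)) => //.
rewrite scalerA mulrC mulfVK //; apply/eqP; rewrite -subr_eq0; apply/eqP.
rewrite -[RHS]oppr0 -H; lmod.
Qed.

Lemma assoc a b u : extremal br a -> extremal br b -> g a b != 0 ->
  g b (br a u) = - g (br a b) u.
Proof.
move=> Ha Hb Hab; have [gaa gab] := ext_gaa Ha.
have [Hz EF] := phi_ext Ha Hb.
have EF2 : forall u w, br (br (phi a b) u) (br (phi a b) w) =
   g b (phi (-a) (br u w)) *: phi a b + g b (phi (-a) w) *: br (phi a b) u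
   - g b (phi (-a) u) *: br (phi a b) w.
  by move=> u' w'; case: (EF u' w').
have Hza : g (phi a b) a = g a b.
  by rewrite /phi !gDl gZl gaa mulr0 addr0 (gC (br a b)) gab addr0 gC.
have := uniq_g (w0:=a) Hz EF2; rewrite Hza => /(_ Hab) H.
have : g b (phi (- a) a) = g a b by rewrite /phi brNl brxx oppr0 gNl gaa oppr0 scale0r !addr0 gC.
move=> /H /(_ u); rewrite /phi !gDr !gDl brNl !gNr !gNl !gZr !gZl.
rewrite gNr (gC b a) => E.
apply/eqP; rewrite -subr_eq0; apply/eqP; move/eqP: E; rewrite -subr_eq0 => /eqP E.
rewrite -[RHS]oppr0 -E; ring.
Qed.

End Ext.

Section Grad.
Variables (k : fieldType) (L : lmodType k) (br : L -> L -> L) (g : L -> L -> k).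
Hypothesis Hbr : is_lie_bracket br.
Hypothesis Hg : extremal_form_g br g.
Hypothesis Hsimple : lie_simple br.

Local Notation brDl := (brDl Hbr). Local Notation brDr := (brDr Hbr).
Local Notation br0l := (br0l Hbr). Local Notation br0r := (br0r Hbr).
Local Notation brZl := (brZl Hbr). Local Notation brZr := (brZr Hbr).
Local Notation brNl := (brNl Hbr). Local Notation brNr := (brNr Hbr).
Local Notation brxx := (brxx Hbr). Local Notation brC := (brC Hbr).
Local Notation brJ := (brJ Hbr).
Local Notation gDl := (gDl Hg). Local Notation g0l := (g0l Hg).
Local Notation gZl := (gZl Hg). Local Notation gC := (gC Hg).
Local Notation gNl := (gNl Hg). Local Notation gDr := (gDr Hg).
Local Notation g0r := (g0r Hg). Local Notation gZr := (gZr Hg).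
Local Notation gNr := (gNr Hg).
Local Notation E1 := (E1 Hg). Local Notation E2 := (E2 Hg). Local Notation E3 := (E3 Hg).
Local Notation ext_gaa := (ext_gaa Hbr Hg Hsimple).
Local Notation ext_nonprop := (ext_nonprop Hbr Hg Hsimple).
Local Notation assoc := (assoc Hbr Hg Hsimple).

Lemma gbr a b w : extremal br a -> extremal br b -> g a b != 0 ->
  g (br b a) w = g b (br a w).
Proof. by move=> Ha Hb Hab; rewrite (assoc w Ha Hb Hab) brC gNl. Qed.

Lemma one_neq0 : (1 : k) != 0. Proof. exact: oner_neq0. Qed.

Lemma m1_of a b v : extremal br a -> extremal br b -> g a b = 1 ->
  br a v = 0 -> br (br a b) v = - v ->
  [/\ br a (br b v) = - v, g a (br b v) = 0 & grad_m1 br g a b v].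
Proof.
move=> Ha Hb Hab Hv0 Hh.
have J : br a (br b v) = - v by rewrite brJ Hv0 br0r addr0 Hh.
have Hab0 : g a b != 0 by rewrite Hab one_neq0.
have Hba0 : g b a != 0 by rewrite gC Hab one_neq0.
have := E3 b (br b v) Ha; rewrite J !brNr J opprK Hab scale1r => E.
have key : g a (br b (br b v)) *: a = g a (br b v) *: br a b.
  apply/eqP; rewrite -subr_eq0; apply/eqP.
  have -> : 0 = (g a (br b (br b v)) *: a - g a (br b v) *: br a b - - v) - v by rewrite -E subrr.
  lmod.
have G1 : g a (br b v) = 0.
  case: (eqVneq (g a (br b v)) 0) => // Hn; exfalso.
  move/negP: (ext_nonprop Ha Hab0 (g a (br b (br b v)) / g a (br b v))); apply.
  apply/eqP; apply: (@scalerI _ _ (g a (br b v))) => //.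
  by rewrite -key scalerA mulrC mulfVK.
have G2 : g a (br b (br b v)) = 0.
  move: key; rewrite G1 scale0r => /eqP; rewrite scaler_eq0 (negPf (ext_neq0 Ha)) orbF.
  by move/eqP.
split=> //; exists (- br b v); split; last by rewrite brNr J opprK.
split; rewrite gC ?gNr.
- by rewrite G1 oppr0.
- by rewrite (ext_gaa Hb).2 oppr0.
- by rewrite (gbr (br b v) Hb Ha Hba0) G2 oppr0.
Qed.

Lemma m1_char a b v : extremal br a -> extremal br b -> g a b = 1 ->
  (grad_m1 br g a b v <-> br a v = 0 /\ br (br a b) v = - v).
Proof.
move=> Ha Hb Hab; have Hba0 : g b a != 0 by rewrite gC Hab one_neq0.
split; last by case=> H1 H2; case: (m1_of Ha Hb Hab H1 H2).
case=> u [[g1 g2 g3] ->]; split.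
- by rewrite E1 // gC g1 mulr0 scale0r.
- rewrite E2 // -(gbr u Hb Ha Hba0) gC g3 scale0r add0r.
  by rewrite gC g1 scale0r add0r Hab scale1r.
Qed.

Lemma m1_gb a b v : extremal br a -> extremal br b -> g a b = 1 ->
  grad_m1 br g a b v -> g b v = 0 /\ g a v = 0.
Proof.
move=> Ha Hb Hab [u [[g1 g2 g3] ->]]; split; last by rewrite (ext_gaa Ha).2.
have Hab0 : g a b != 0 by rewrite Hab one_neq0.
by rewrite (assoc u Ha Hb Hab0) gC g3 oppr0.
Qed.

Lemma m1_br a b v w : extremal br a -> grad_m1 br g a b v -> grad_m1 br g a b w ->
  exists l, br v w = l *: a.
Proof.
move=> Ha [u [[g1 _ _] ->]] [u' [[g1' _ _] ->]]; exists (g a (br u u')).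
by rewrite E2 // (gC a u') g1' (gC a u) g1 !scale0r addr0 subr0.
Qed.

Lemma g1_m1 a b v : grad_1 br g a b v <-> grad_m1 br g b a v.
Proof.
have sw : forall u, gradU br g a b u <-> gradU br g b a u.
  move=> u; split; case=> H1 H2 H3; split=> //; move: H3;
  by rewrite brC gNr => /eqP; rewrite oppr_eq0 => /eqP.
by split; case=> u [/sw Hu ->]; exists u.
Qed.

Lemma m1_1 a b v : extremal br a -> extremal br b -> g a b = 1 ->
  (grad_1 br g a b v <-> br b v = 0 /\ br (br a b) v = v).
Proof.
move=> Ha Hb Hab; have Hba : g b a = 1 by rewrite gC.
rewrite g1_m1 (m1_char _ Hb Ha Hba) (brC b a) brNl.
by split; case=> H1 H2; split=> //; [apply: oppr_inj | rewrite H2].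
Qed.

Lemma g1_gb a b v : extremal br b -> grad_1 br g a b v -> g b v = 0.
Proof. by move=> Hb [u [_ ->]]; rewrite (ext_gaa Hb).2. Qed.

End Grad.

Section Main.
Variables (k : fieldType) (L : lmodType k) (br : L -> L -> L) (g : L -> L -> k).
Hypothesis Hbr : is_lie_bracket br.
Hypothesis Hg : extremal_form_g br g.
Hypothesis Hsimple : lie_simple br.
Variables (x y c d q : L).
Hypotheses (Hx : extremal br x) (Hy : extremal br y) (Hxy : g x y = 1)
  (Hc : extremal br c) (Hc1 : grad_m1 br g x y c)
  (Hd : extremal br d) (Hd1 : grad_m1 br g x y d) (Hcd : br c d = x) (Hqd : q = - br y d).

Local Notation brDl := (brDl Hbr). Local Notation brDr := (brDr Hbr).
Local Notation br0l := (br0l Hbr). Local Notation br0r := (br0r Hbr).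
Local Notation brZl := (brZl Hbr). Local Notation brZr := (brZr Hbr).
Local Notation brNl := (brNl Hbr). Local Notation brNr := (brNr Hbr).
Local Notation brxx := (brxx Hbr). Local Notation brC := (brC Hbr).
Local Notation brJ := (brJ Hbr).
Local Notation gDl := (gDl Hg). Local Notation g0l := (g0l Hg).
Local Notation gZl := (gZl Hg). Local Notation gC := (gC Hg).
Local Notation gNl := (gNl Hg). Local Notation gDr := (gDr Hg).
Local Notation g0r := (g0r Hg). Local Notation gZr := (gZr Hg).
Local Notation gNr := (gNr Hg).
Local Notation E1 := (E1 Hg). Local Notation E2 := (E2 Hg). Local Notation E3 := (E3 Hg).
Local Notation ext_gaa := (ext_gaa Hbr Hg Hsimple).
Local Notation ext_nonprop := (ext_nonprop Hbr Hg Hsimple).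
Local Notation gbr := (gbr Hbr Hg Hsimple).

Local Notation h := (br x y).
Local Notation h' := (br c q).

Lemma Lm1 v : grad_m1 br g x y v <-> br x v = 0 /\ br h v = - v.
Proof. have := m1_char Hbr Hg Hsimple v Hx Hy Hxy. by []. Qed.

Lemma m1J v : grad_m1 br g x y v -> br x (br y v) = - v /\ g x (br y v) = 0.
Proof.
move=> /Lm1 [H1 H2]; by case: (m1_of Hbr Hg Hsimple Hx Hy Hxy H1 H2).
Qed.

Lemma m1g v : grad_m1 br g x y v -> g y v = 0 /\ g x v = 0.
Proof. move=> Hv; exact: (m1_gb Hbr Hg Hsimple Hx Hy Hxy Hv). Qed.

Lemma m1b v w : grad_m1 br g x y v -> grad_m1 br g x y w -> exists l, br v w = l *: x.
Proof. move=> Hv Hw; exact: (m1_br Hg Hx Hv Hw). Qed.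

Lemma xc : br x c = 0. Proof. by case: (Lm1 c).1. Qed.
Lemma hc : br h c = - c. Proof. by case: (Lm1 c).1. Qed.
Lemma xd : br x d = 0. Proof. by case: (Lm1 d).1. Qed.
Lemma hd : br h d = - d. Proof. by case: (Lm1 d).1. Qed.
Lemma xq : br x q = d. Proof. by rewrite Hqd brNr (m1J Hd1).1 opprK. Qed.
Lemma gxq : g x q = 0. Proof. by rewrite Hqd gNr (m1J Hd1).2 oppr0. Qed.
Lemma gyd : g y d = 0. Proof. by case: (m1g Hd1). Qed.
Lemma gxd : g x d = 0. Proof. by case: (m1g Hd1). Qed.
Lemma gyc : g y c = 0. Proof. by case: (m1g Hc1). Qed.

Lemma Hq : extremal br q.
Proof.
have Hnd := ext_neg Hbr Hg Hd.
have [H1 _] := phi_ext Hbr Hg Hsimple Hy Hnd.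
have E1' : phi br g y (- d) = q - d.
  by rewrite Hqd /phi brNr gNr gyd oppr0 scale0r addr0 addrC.
rewrite E1' in H1; have [H2 _] := phi_ext Hbr Hg Hsimple Hx H1.
have E2' : phi br g x (q - d) = q.
  rewrite /phi brDr xq brNr xd gDr gxq gNr gxd; lmod.
by rewrite E2' in H2.
Qed.

Lemma gcq : g c q = 1.
Proof.
have c0 := ext_neq0 Hc.
have := E3 y d Hc; rewrite Hcd (brC y x) brNr brC hc opprK (gC c y) gyc scale0r subr0 => E.
have ncy : forall l, br c y != l *: c.
  move=> l; apply/negP => /eqP H.
  have := (m1J Hc1).1; rewrite (brC y c) brNr H brZr xc scaler0 oppr0 => /eqP.
  by rewrite eq_sym oppr_eq0 (negPf c0).
have gcd0 : g c d = 0.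
  case: (eqVneq (g c d) 0) => // Hn; exfalso.
  move/negP: (ncy ((g c (br y d) + 1) / g c d)); apply; apply/eqP.
  apply: (@scalerI _ _ (g c d)) => //; rewrite scalerA mulrC mulfVK //.
  apply/eqP; rewrite -subr_eq0; apply/eqP.
  have -> : 0 = - c - (g c (br y d) *: c - g c d *: br c y) by rewrite -E subrr.
  lmod.
move: E; rewrite gcd0 scale0r subr0 => /eqP.
rewrite -subr_eq0 -scaleN1r -scalerBl scaler_eq0 (negPf c0) orbF subr_eq0 => /eqP E.
by rewrite Hqd gNr -E opprK.
Qed.

Lemma gqc : g q c = 1. Proof. by rewrite gC gcq. Qed.
Lemma gcq0 : g c q != 0. Proof. by rewrite gcq one_neq0. Qed.
Lemma gqc0 : g q c != 0. Proof. by rewrite gqc one_neq0. Qed.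

Lemma Lc v : grad_m1 br g c q v <-> br c v = 0 /\ br h' v = - v.
Proof. have := m1_char Hbr Hg Hsimple v Hc Hq gcq. by []. Qed.
Lemma L1' v : grad_1 br g c q v <-> br q v = 0 /\ br h' v = v.
Proof. have := m1_1 Hbr Hg Hsimple v Hc Hq gcq. by []. Qed.

Lemma qd : br q d = 0.
Proof.
rewrite Hqd brNl brC (brC y d) brNr E1 // gC gyd mulr0 scale0r; by rewrite !oppr0.
Qed.

Lemma hq : br h q = q.
Proof.
rewrite Hqd brNr brJ hd brNr.
have -> : br h y = 2 *: y.
  by rewrite brC (brC x y) brNr opprK E1 // gC Hxy mulr1.
rewrite brZl; lmod.
Qed.

Lemma hx : br h x = (- 2) *: x.
Proof. by rewrite brC E1 // Hxy mulr1 scaleNr. Qed.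
Lemma h'c : br h' c = (- 2) *: c.
Proof. by rewrite brC E1 // gcq mulr1 scaleNr. Qed.
Lemma h'q : br h' q = 2 *: q.
Proof. by rewrite brC (brC c q) brNr opprK (E1 _ Hq) gqc mulr1. Qed.
Lemma h'd : br h' d = d.
Proof.
have := brJ c q d; rewrite qd br0r Hcd => /eqP; rewrite eq_sym addr_eq0 => /eqP ->.
by rewrite brC xq opprK.
Qed.
Lemma gqx : g q x = 0. Proof. by rewrite gC gxq. Qed.
Lemma qx : br q x = - d. Proof. by rewrite brC xq. Qed.

Lemma decomp v : grad_m1 br g x y v ->
  let T := br c (br q v) in
  exists a : k, br c v = a *: x /\ [/\
    grad_m1 br g x y (- T - (2 * g q v) *: c),
    grad_m1 br g c q (- T - (2 * g q v) *: c),
    grad_m1 br g x y (v + T + g q v *: c - a *: d),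
    grad_0 br c q (v + T + g q v *: c - a *: d) &
    v = g q v *: c + (- T - (2 * g q v) *: c) + (v + T + g q v *: c - a *: d) + a *: d].
Proof.
move=> Hv T; have [a Ha] := m1b Hc1 Hv; exists a.
have [Hxv Hhv] := (Lm1 v).1 Hv.
have [b Hb] := m1b Hd1 Hv.
have Tx : br x T = 0.
  by rewrite /T (brJ x c) xc br0l add0r (brJ x q v) xq Hxv br0r addr0 Hb brZr (brC c x) xc oppr0 scaler0.
have Th : br h T = - T.
  by rewrite /T (brJ h c) hc brNl (brJ h q v) hq Hhv brNr addrN br0r addr0.
have gcqv : g c (br q v) = 0.
  rewrite -(gbr v Hq Hc gqc0) brC gNl (gbr v Hc Hq gcq0) Ha gZr gqx mulr0 oppr0 //.
have Tc : br c T = 0.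
  by rewrite /T E1 // gcqv mulr0 scale0r.
have T2 : br c (br q T) = (2 * g q v) *: c - T.
  rewrite /T (E3 q (br q v) Hc) (E1 v Hq) gZr gcq gcqv scale0r mulr1 subr0 scale1r //.
have h'v : br h' v = T + a *: d.
  have := brJ c q v; rewrite Ha brZr qx => E.
  have -> : br h' v = br c (br q v) - a *: - d by rewrite E; lmod.
  rewrite /T; lmod.
have h'T : br h' T = (2 * g q v) *: c - T.
  rewrite {1}/T (brJ h' c (br q v)) h'c brZl (brJ h' q v) h'q brZl h'v.
  rewrite !brDr !brZr qd br0r scaler0 addr0 -/T T2; lmod.
have qT : br q T = - (g q v *: br q c) - br q v.
  rewrite /T (E3 c v Hq) Ha gZr gqx mulr0 scale0r sub0r gqc scale1r //.
split=> //; split.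
- apply/Lm1; split.
  + rewrite !brDr !brNr !brZr Tx xc; lmod.
  + rewrite !brDr !brNr !brZr Th hc; lmod.
- apply/Lc; split.
  + rewrite !brDr !brNr !brZr Tc brxx; lmod.
  + rewrite !brDr !brNr !brZr h'T h'c; lmod.
- apply/Lm1; split.
  + rewrite !brDr !brNr !brZr Tx xc xd Hxv; lmod.
  + rewrite !brDr !brNr !brZr Th hc hd Hhv; lmod.
- split; exists 0; rewrite scale0r.
  + rewrite !brDr !brNr !brZr Tc brxx Hcd Ha scaler0 addr0; lmod.
  + rewrite !brDr !brNr !brZr qT qd scaler0 oppr0 addr0; lmod.
- lmod.
Qed.

Lemma Jfacts j : grad_m1 br g x y j -> grad_m1 br g c q j ->
  [/\ br c j = 0, br h' j = - j, g q j = 0 & br c (br q j) = - j].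
Proof.
move=> H1 H2; have [Hc0 Hh] := (Lc j).1 H2.
have [gq _] := m1_gb Hbr Hg Hsimple Hc Hq gcq H2.
by case: (m1_of Hbr Hg Hsimple Hc Hq gcq Hc0 Hh).
Qed.

Lemma J'facts j : grad_m1 br g x y j -> grad_0 br c q j ->
  [/\ br c j = 0, br q j = 0, g q j = 0 & br h' j = 0].
Proof.
move=> H1 [[l Hl] [m Hm]].
have c0 := ext_neq0 Hc.
have Hcj : br c j = 0.
  have [b Hb] := m1b Hc1 H1.
  have E : l *: c = b *: x by rewrite -Hl.
  have := congr1 (br h) E; rewrite !brZr hc hx => E'.
  have E2' : l *: - c = (-2) *: (l *: c) by rewrite E' E; lmod.
  have : l *: c = 0.
    have -> : l *: c = l *: - c - (-2) *: (l *: c) by lmod.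
    by rewrite E2' subrr.
  by rewrite Hl.
have := E3 q j Hc; rewrite Hcj br0r br0r Hm gZr gcq mulr1 scaler0 subr0 => /eqP.
rewrite eq_sym subr_eq0 => /eqP E.
have gcj : g c j = 0.
  case: (eqVneq (g c j) 0) => // Hn; exfalso.
  move/negP: (ext_nonprop Hc gcq0 (m / g c j)); apply; apply/eqP.
  apply: (@scalerI _ _ (g c j)) => //; by rewrite scalerA mulrC mulfVK.
have Hqj : br q j = 0.
  move: E; rewrite gcj scale0r => /eqP; rewrite scaler_eq0 (negPf c0) orbF => /eqP m0.
  by rewrite Hm m0 scale0r.
have := E3 c j Hq; rewrite Hqj !br0r Hcj g0r scale0r scaler0 sub0r subr0 => /eqP.
rewrite eq_sym oppr_eq0 scaler_eq0 => /orP [/eqP gqj|].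
- have E0 : br h' j = 0 by have := brJ c q j; rewrite Hqj br0r Hcj br0r addr0.
  by split => //; rewrite -Hm.
- by move/eqP => qc0; move/negP: (ext_nonprop Hq gqc0 0); rewrite scale0r qc0 eqxx.
Qed.

Lemma main_result :
  [/\ (forall v, grad_m1 br g x y v <->
         exists (l : k) (j j' : L) (m : k),
           [/\ grad_m1 br g x y j /\ grad_m1 br g c q j,
               grad_m1 br g x y j' /\ grad_0 br c q j' & v = l *: c + j + j' + m *: d]),
      (forall (l : k) (j j' : L) (m : k),
         grad_m1 br g x y j /\ grad_m1 br g c q j ->
         grad_m1 br g x y j' /\ grad_0 br c q j' ->
         l *: c + j + j' + m *: d = 0 ->
         [/\ l *: c = 0, j = 0, j' = 0 & m *: d = 0]) &
      (forall v, grad_m1 br g x y v /\ grad_1 br g c q v <->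
         exists m : k, v = m *: d)].
Proof.
have x0 := ext_neq0 Hx.
have C1 : forall v, grad_m1 br g x y v <->
         exists (l : k) (j j' : L) (m : k),
           [/\ grad_m1 br g x y j /\ grad_m1 br g c q j,
               grad_m1 br g x y j' /\ grad_0 br c q j' & v = l *: c + j + j' + m *: d].
  move=> v; split=> [Hv|].
  - have [a [_ [Hj1 Hj2 Hj'1 Hj'2 Ev]]] := decomp Hv.
    exists (g q v), (- br c (br q v) - (2 * g q v) *: c),
      (v + br c (br q v) + g q v *: c - a *: d), a.
    by split=> //; split.
  - case=> [l [j [j' [m [[Hj1 _] [Hj'1 _] ->]]]]].
    have [xj hj] := (Lm1 j).1 Hj1; have [xj' hj'] := (Lm1 j').1 Hj'1.
    apply/Lm1; split.
    + rewrite !brDr !brZr xc xj xj' xd; lmod.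
    + rewrite !brDr !brZr hc hj hj' hd; lmod.
have Hd1' : grad_1 br g c q d by apply/L1'; split; [exact: qd | exact: h'd].
have gqd : g q d = 0 by exact: (g1_gb Hbr Hg Hsimple Hq Hd1').
split=> //.
- move=> l j j' m [Hj1 Hj2] [Hj'1 Hj'2] E.
  have [cj h'j gqj _] := Jfacts Hj1 Hj2.
  have [cj' qj' gqj' h'j'] := J'facts Hj'1 Hj'2.
  have : m *: x = 0.
    by rewrite -[RHS](br0r c) -E !brDr !brZr brxx cj cj' Hcd; lmod.
  move/eqP; rewrite scaler_eq0 (negPf x0) orbF => /eqP m0.
  have : l = 0.
    have := congr1 (g q) E; rewrite !gDr !gZr gqc gqj gqj' m0 g0r; move=> <-; ring.
  move=> l0; move: E; rewrite l0 m0 !scale0r add0r addr0 => E.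
  have j0 : j = 0.
    have := congr1 (br h') E; rewrite brDr h'j h'j' br0r addr0 => /eqP.
    by rewrite oppr_eq0 => /eqP.
  split=> //; move: E; rewrite j0 add0r //.
- move=> v; split.
  + case=> Hv H1; have [Hqv Hh'v] := (L1' v).1 H1.
    have gqv := g1_gb Hbr Hg Hsimple Hq H1.
    have [l [j [j' [m [[Hj1 Hj2] [Hj'1 Hj'2] Ev]]]]] := (C1 v).1 Hv.
    have [cj h'j gqj cqj] := Jfacts Hj1 Hj2.
    have [cj' qj' gqj' h'j'] := J'facts Hj'1 Hj'2.
    have l0 : l = 0.
      move: gqv; rewrite Ev !gDr !gZr gqc gqj gqj' gqd => <-; ring.
    have j0 : j = 0.
      move: Hqv; rewrite Ev l0 !brDr !brZr qj' qd scale0r scaler0 add0r !addr0 => qj.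
      by move: cqj; rewrite qj br0r => /eqP; rewrite eq_sym oppr_eq0 => /eqP.
    exists m; rewrite -Hh'v Ev !brDr !brZr h'c h'j h'j' h'd l0 j0; lmod.
  + case=> m ->; split.
    * apply/Lm1; rewrite !brZr xd hd; split; lmod.
    * apply/L1'; rewrite !brZr qd h'd; split; lmod.
Qed.

End Main.

Unset Implicit Arguments.

Theorem proposition4p6 (k : fieldType) (L : lmodType k) (br : L -> L -> L)
  (g : L -> L -> k)
  (Hk : card_ge4 k)
  (Hbr : is_lie_bracket br)
  (Hsimple : lie_simple br)
  (Hgen : generated_by_pure br)
  (Hlines : has_lines br)
  (Hg : extremal_form_g br g)
  (x y c d : L)
  (Hx : extremal br x) (Hy : extremal br y) (Hxy : g x y = 1)
  (Hc : extremal br c) (Hc1 : grad_m1 br g x y c)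
  (Hd : extremal br d) (Hd1 : grad_m1 br g x y d)
  (Hcd : br c d = x) :
  let q := - br y d in
  let J := fun v => grad_m1 br g x y v /\ grad_m1 br g c q v in
  let J' := fun v => grad_m1 br g x y v /\ grad_0 br c q v in
  [/\ (forall v, grad_m1 br g x y v <->
         exists (l : k) (j j' : L) (m : k),
           [/\ J j, J' j' & v = l *: c + j + j' + m *: d]),
      (forall (l : k) (j j' : L) (m : k), J j -> J' j' ->
         l *: c + j + j' + m *: d = 0 ->
         [/\ l *: c = 0, j = 0, j' = 0 & m *: d = 0]) &
      (forall v, grad_m1 br g x y v /\ grad_1 br g c q v <->
         exists m : k, v = m *: d)].
Proof.
move=> q J J'.
exact: (@main_result k L br g Hbr Hg Hsimple x y c d q Hx Hy Hxy Hc Hc1 Hd Hd1 Hcd erefl).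
Qed.
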